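(* Let $H$ be obtained from $F_4$ by adding a new vertex $v$ and joining it to three distinct vertices of $F_4$; let $S$ be the set of these three neighbours. If $H$ does not contain $K_{3,4}$ as a minor, then either $S$ contains two vertices adjacent in $F_4$, or $S=\{f^1_1,f^1_4,f^2\}$, or $S=\{f^2_1,f^2_4,f^1\}$. Moreover, if $S=\{f^1_1,f^1_4,f^2\}$ or $S=\{f^2_1,f^2_4,f^1\}$, then $H$ contains $\mathfrak{Q}^+$ as a minor.
   Context: $F_4$ is the graph with vertex set $\{f^1,f^2\}\cup\{f^i_j: i\in\{1,2\}, j\in\{1,2,3,4\}\}$ and the 16 edges: for each $i\in\{1,2\}$, $f^if^i_1$, $f^if^i_2$, $f^if^i_4$, $f^i_3f^i_1$, $f^i_3f^i_2$, $f^i_3f^i_4$; and $f^1_jf^2_{5-j}$ for $j=1,2,3,4$. $\mathfrak{Q}^+$ is the graph obtained from the cube $Q_3$ by adding a new vertex adjacent to three pairwise non-adjacent vertices of the cube. *)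

(* Defs.v *)
From mathcomp Require Import all_boot.
Set Implicit Arguments. Unset Strict Implicit. Unset Printing Implicit Defensive.

(* Simple graphs: a finType of vertices with a (symmetric, irreflexive) rel. *)

Definition induced_connected (T : finType) (e : rel T) (A : {set T}) : Prop :=
  forall a b, a \in A -> b \in A ->
    connect [rel u w | [&& u \in A, w \in A & e u w]] a b.

Definition has_minor (G : finType) (eG : rel G) (T : finType) (eT : rel T) : Prop :=
  exists phi : G -> {set T},
    [/\ (forall x, phi x != set0),
        (forall x y, x != y -> [disjoint phi x & phi y]),
        (forall x, induced_connected eT (phi x)) &
        (forall x y, eG x y -> exists a b, [/\ a \in phi x, b \in phi y & eT a b])].

(* Vertices of F_4: (i, j) with i : 'I_2 (i = 0 for superscript 1, i = 1 for
   superscript 2), j : 'I_5; j = 0 is f^i, j = 1..4 is f^i_j. *)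
Definition F4V := ('I_2 * 'I_5)%type.

Definition F4e0 (x y : F4V) : bool :=
  let: (i, j) := x in let: (i', j') := y in
  ((i == i' :> nat) && ((j == 0 :> nat) || (j == 3 :> nat)) && ((j' : nat) \in [:: 1; 2; 4]))
  || ((i != i' :> nat) && (j != 0 :> nat) && (j' != 0 :> nat) && (j + j' == 5)).

Definition F4e : rel F4V := fun x y => F4e0 x y || F4e0 y x.

Definition fv (i : 'I_2) : F4V := (i, ord0).
Definition fij (i : 'I_2) (j : nat) : F4V := (i, inord j).
Definition i1 : 'I_2 := ord0.
Definition i2 : 'I_2 := ord_max.

Definition addv_e (S : {set F4V}) : rel (option F4V) := fun x y =>
  match x, y with
  | Some a, Some b => F4e a b
  | None, Some b => b \in S
  | Some a, None => a \in S
  | None, None => false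
  end.

Definition K34e : rel ('I_3 + 'I_4)%type := fun x y =>
  match x, y with
  | inl _, inr _ => true
  | inr _, inl _ => true
  | _, _ => false
  end.

(* Q^+: cube Q_3 on {ffun 'I_3 -> bool} (adjacent iff differ in exactly one
   coordinate), plus a new vertex None adjacent to the three weight-2 vertices
   (pairwise non-adjacent; any such triple is equivalent under Aut(Q_3)). *)
Definition cubeV := {ffun 'I_3 -> bool}.
Definition cube_e : rel cubeV := fun u v => #|[pred i | u i != v i]| == 1.
Definition Qplus_e : rel (option cubeV) := fun x y =>
  match x, y with
  | Some u, Some v => cube_e u v
  | None, Some v => #|[pred i | v i]| == 2
  | Some u, None => #|[pred i | u i]| == 2
  | None, None => false
  end.

(* Main.v *)
Require Import Defs.
From mathcomp Require Import all_boot.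
From Stdlib Require Import FunctionalExtensionality.

Set Implicit Arguments. Unset Strict Implicit. Unset Printing Implicit Defensive.

Section Generic.
Variables (T : finType) (e : rel T).

Fixpoint conn_aux (seen r : seq T) : bool :=
  if r is y :: r' then has (fun s => e s y && e y s) seen && conn_aux (y :: seen) r'
  else true.
Definition connb (l : seq T) := if l is x :: r then conn_aux [:: x] r else true.

Lemma connb_ok l : connb l -> induced_connected e [set t in l].
Proof.
case: l => [_ a b|h r]; first by rewrite inE.
rewrite /connb => H.
set E := [rel u w | [&& u \in [set t in h :: r], w \in [set t in h :: r] & e u w]].
have key : forall seen r', conn_aux seen r' -> {subset seen <= h :: r} ->
   {subset r' <= h :: r} ->
   (forall s, s \in seen -> connect E h s /\ connect E s h) ->
   forall t, t \in r' -> connect E h t /\ connect E t h.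
  move=> seen r'; elim: r' seen => [//|y r' IH] seen /= /andP[/hasP[s hs /andP[esy eys]] Hr]
     Hsub Hsub' Hc t.
  have yl : y \in h :: r by apply: Hsub'; rewrite inE eqxx.
  have sl : s \in h :: r by apply: Hsub.
  have [c1 c2] := Hc s hs.
  have cy : connect E h y /\ connect E y h.
    split.
      apply: connect_trans c1 (connect1 _); by rewrite /= !in_set sl yl esy.
    apply: connect_trans _ c2; apply: connect1; by rewrite /= !in_set sl yl eys.
  rewrite inE => /orP[/eqP->//|tr].
  apply: (IH (y :: seen)) => //.
  - by move=> z; rewrite inE => /orP[/eqP->//|]; apply: Hsub.
  - by move=> z zr; apply: Hsub'; rewrite inE zr orbT.
  - by move=> z; rewrite inE => /orP[/eqP->//|]; apply: Hc.
have all_c : forall t, t \in h :: r -> connect E h t /\ connect E t h.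
  move=> t; rewrite inE => /orP[/eqP->|tr]; first by split; apply: connect0.
  apply: (key [:: h] r) => //.
  - by move=> z; rewrite inE => /eqP->; rewrite inE eqxx.
  - by move=> z zr; rewrite inE zr orbT.
  - by move=> z; rewrite inE => /eqP->; split; apply: connect0.
move=> a b; rewrite !in_set => ha hb.
have [_ ca] := all_c a ha; have [cb _] := all_c b hb.
exact: connect_trans ca cb.
Qed.

Definition checkW (n : nat) (eN : nat -> nat -> bool) (W : seq (seq T)) : bool :=
  [&& all (fun i => nth [::] W i != [::]) (iota 0 n),
      all (fun i => all (fun j => (i == j) || ~~ has (fun t => t \in nth [::] W j) (nth [::] W i)) (iota 0 n)) (iota 0 n),
      all (fun i => connb (nth [::] W i)) (iota 0 n) &
      all (fun i => all (fun j => ~~ eN i j || has (fun a => has (e a) (nth [::] W j)) (nth [::] W i)) (iota 0 n)) (iota 0 n)].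

Lemma minor_ok (G : finType) (eG : rel G) (idx : G -> nat) (n : nat)
  (eN : nat -> nat -> bool) (W : seq (seq T)) :
  injective idx -> (forall x, idx x < n) -> (forall x y, eG x y -> eN (idx x) (idx y)) ->
  checkW n eN W -> has_minor eG e.
Proof.
move=> inj lt hE /and4P[C1 C2 C3 C4].
have mI : forall x, idx x \in iota 0 n by move=> x; rewrite mem_iota add0n lt.
exists (fun x => [set t in nth [::] W (idx x)]); split.
- move=> x; have := allP C1 _ (mI x).
  case: (nth [::] W (idx x)) => [//|t l] _.
  by apply/set0Pn; exists t; rewrite !inE eqxx.
- move=> x y nxy.
  have := allP (allP C2 _ (mI x)) _ (mI y).
  have -> : (idx x == idx y) = false by apply/negbTE; apply: contra nxy => /eqP/inj->.
  move=> /= /hasPn H; rewrite disjoint_subset; apply/subsetP => t.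
  by rewrite !inE => tx; apply: H.
- by move=> x; apply: connb_ok; apply: (allP C3).
- move=> x y exy; have := allP (allP C4 _ (mI x)) _ (mI y).
  rewrite hE //= => /hasP[a ha /hasP[b hb eab]].
  by exists a, b; rewrite !inE.
Qed.

End Generic.

Definition o2 (n:nat) : 'I_2 := match n with 0 => @Ordinal 2 0 isT | _ => @Ordinal 2 1 isT end.
Definition o5 (n:nat) : 'I_5 := match n with 0 => @Ordinal 5 0 isT | 1 => @Ordinal 5 1 isT
  | 2 => @Ordinal 5 2 isT | 3 => @Ordinal 5 3 isT | _ => @Ordinal 5 4 isT end.
Definition fx i j : F4V := (o2 i, o5 j).
Definition vx i j : option F4V := Some (fx i j).
Definition vN : option F4V := None.

Definition allF4 : seq F4V := [:: fx 0 0; fx 0 1; fx 0 2; fx 0 3; fx 0 4;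
  fx 1 0; fx 1 1; fx 1 2; fx 1 3; fx 1 4].

Lemma allF4_mem x : x \in allF4.
Proof.
by case: x => [[[|[|i]] Hi] [[|[|[|[|[|j]]]]] Hj]] //.
Qed.

Definition addv_l (l : seq F4V) : rel (option F4V) := fun x y =>
  match x, y with
  | Some a, Some b => F4e a b
  | None, Some b => b \in l
  | Some a, None => a \in l
  | None, None => false
  end.

Lemma addv_eq (S : {set F4V}) l : S =i l -> addv_e S = addv_l l.
Proof.
move=> H; apply: functional_extensionality => x; apply: functional_extensionality => y.
by case: x => [a|]; case: y => [b|] //=; rewrite H.
Qed.

Definition table : seq (seq F4V * seq (seq (option F4V))) := [:: 
  ([:: (fx 0 0); (fx 0 3); (fx 1 0)], [:: [:: (vx 0 0)]; [:: (vx 0 3)]; [:: (vx 1 0); (vx 1 1)]; [:: (vx 0 1); (vx 1 4)]; [:: (vx 0 2); (vx 1 3)]; [:: (vx 0 4)]; [:: vN]]);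
  ([:: (fx 0 0); (fx 0 3); (fx 1 1)], [:: [:: (vx 0 0)]; [:: (vx 0 3)]; [:: (vx 1 1); (vx 1 3)]; [:: (vx 0 1); (vx 1 4)]; [:: (vx 0 2)]; [:: (vx 0 4)]; [:: vN]]);
  ([:: (fx 0 0); (fx 0 3); (fx 1 3)], [:: [:: (vx 0 0)]; [:: (vx 0 3)]; [:: (vx 1 3)]; [:: (vx 0 1); (vx 1 4)]; [:: (vx 0 2)]; [:: (vx 0 4); (vx 1 1)]; [:: vN]]);
  ([:: (fx 0 0); (fx 0 3); (fx 1 4)], [:: [:: (vx 0 0)]; [:: (vx 0 3)]; [:: (vx 1 3); (vx 1 4)]; [:: (vx 0 1)]; [:: (vx 0 2)]; [:: (vx 0 4); (vx 1 1)]; [:: vN]]);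
  ([:: (fx 0 0); (fx 1 0); (fx 1 3)], [:: [:: (vx 0 0); (vx 0 1); (vx 0 3); (vx 0 4)]; [:: (vx 1 0)]; [:: (vx 1 3)]; [:: (vx 1 1)]; [:: (vx 1 2)]; [:: (vx 1 4)]; [:: vN]]);
  ([:: (fx 0 0); (fx 1 1); (fx 1 2)], [:: [:: (vx 0 0); (vx 0 1); (vx 1 4)]; [:: (vx 1 1)]; [:: (vx 1 2)]; [:: (vx 0 3); (vx 0 4)]; [:: (vx 1 0)]; [:: (vx 1 3)]; [:: vN]]);
  ([:: (fx 0 0); (fx 1 2); (fx 1 4)], [:: [:: (vx 0 0); (vx 0 4); (vx 1 1)]; [:: (vx 1 2)]; [:: (vx 1 4)]; [:: (vx 0 1); (vx 0 3)]; [:: (vx 1 0)]; [:: (vx 1 3)]; [:: vN]]);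
  ([:: (fx 0 1); (fx 0 2); (fx 0 4)], [:: [:: (vx 0 1); (vx 1 4)]; [:: (vx 0 2)]; [:: (vx 0 4); (vx 1 1)]; [:: (vx 0 0)]; [:: (vx 0 3)]; [:: (vx 1 3)]; [:: vN]]);
  ([:: (fx 0 1); (fx 0 2); (fx 1 0)], [:: [:: (vx 0 1); (vx 0 3); (vx 0 4)]; [:: (vx 0 2); (vx 1 3)]; [:: (vx 1 0)]; [:: (vx 1 1)]; [:: (vx 1 2)]; [:: (vx 1 4)]; [:: vN]]);
  ([:: (fx 0 1); (fx 0 2); (fx 1 1)], [:: [:: (vx 0 1); (vx 1 4)]; [:: (vx 0 2)]; [:: (vx 0 4); (vx 1 1)]; [:: (vx 0 0)]; [:: (vx 0 3)]; [:: (vx 1 3)]; [:: vN]]);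
  ([:: (fx 0 1); (fx 0 2); (fx 1 2)], [:: [:: (vx 0 0); (vx 0 1); (vx 0 4)]; [:: (vx 0 2); (vx 1 3)]; [:: (vx 1 0); (vx 1 2)]; [:: (vx 0 3)]; [:: (vx 1 1)]; [:: (vx 1 4)]; [:: vN]]);
  ([:: (fx 0 1); (fx 0 4); (fx 1 2)], [:: [:: (vx 0 1); (vx 1 4)]; [:: (vx 0 4); (vx 1 1)]; [:: (vx 1 2)]; [:: (vx 0 3)]; [:: (vx 1 0)]; [:: (vx 1 3)]; [:: vN]]);
  ([:: (fx 0 1); (fx 0 4); (fx 1 3)], [:: [:: (vx 0 1); (vx 1 4)]; [:: (vx 0 2); (vx 1 3)]; [:: (vx 0 4)]; [:: (vx 0 0)]; [:: (vx 0 3)]; [:: (vx 1 0); (vx 1 1)]; [:: vN]]);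
  ([:: (fx 0 1); (fx 1 0); (fx 1 3)], [:: [:: (vx 0 1); (vx 0 3); (vx 0 4)]; [:: (vx 1 0)]; [:: (vx 1 3)]; [:: (vx 1 1)]; [:: (vx 1 2)]; [:: (vx 1 4)]; [:: vN]]);
  ([:: (fx 0 1); (fx 1 1); (fx 1 2)], [:: [:: (vx 0 1); (vx 1 4)]; [:: (vx 1 1)]; [:: (vx 1 2)]; [:: (vx 0 3); (vx 0 4)]; [:: (vx 1 0)]; [:: (vx 1 3)]; [:: vN]]);
  ([:: (fx 0 2); (fx 0 4); (fx 1 0)], [:: [:: (vx 0 1); (vx 0 3); (vx 0 4)]; [:: (vx 0 2); (vx 1 3)]; [:: (vx 1 0)]; [:: (vx 1 1)]; [:: (vx 1 2)]; [:: (vx 1 4)]; [:: vN]]);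
  ([:: (fx 0 2); (fx 0 4); (fx 1 2)], [:: [:: (vx 0 0); (vx 0 1); (vx 0 2); (vx 1 4)]; [:: (vx 0 4); (vx 1 1)]; [:: (vx 1 2)]; [:: (vx 0 3)]; [:: (vx 1 0)]; [:: (vx 1 3)]; [:: vN]]);
  ([:: (fx 0 2); (fx 0 4); (fx 1 4)], [:: [:: (vx 0 1); (vx 1 4)]; [:: (vx 0 2)]; [:: (vx 0 4); (vx 1 1)]; [:: (vx 0 0)]; [:: (vx 0 3)]; [:: (vx 1 3)]; [:: vN]]);
  ([:: (fx 0 2); (fx 1 1); (fx 1 2)], [:: [:: (vx 0 0); (vx 0 1); (vx 0 2); (vx 1 4)]; [:: (vx 1 1)]; [:: (vx 1 2)]; [:: (vx 0 3); (vx 0 4)]; [:: (vx 1 0)]; [:: (vx 1 3)]; [:: vN]]);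
  ([:: (fx 0 2); (fx 1 1); (fx 1 4)], [:: [:: (vx 0 1); (vx 1 4)]; [:: (vx 0 2)]; [:: (vx 0 4); (vx 1 1)]; [:: (vx 0 0)]; [:: (vx 0 3)]; [:: (vx 1 3)]; [:: vN]]);
  ([:: (fx 0 2); (fx 1 2); (fx 1 4)], [:: [:: (vx 0 0); (vx 0 2); (vx 0 4); (vx 1 1)]; [:: (vx 1 2)]; [:: (vx 1 4)]; [:: (vx 0 1); (vx 0 3)]; [:: (vx 1 0)]; [:: (vx 1 3)]; [:: vN]]);
  ([:: (fx 0 3); (fx 1 0); (fx 1 3)], [:: [:: (vx 0 1); (vx 0 3); (vx 0 4)]; [:: (vx 1 0)]; [:: (vx 1 3)]; [:: (vx 1 1)]; [:: (vx 1 2)]; [:: (vx 1 4)]; [:: vN]]);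
  ([:: (fx 0 3); (fx 1 1); (fx 1 4)], [:: [:: (vx 0 3); (vx 1 2)]; [:: (vx 1 1)]; [:: (vx 1 4)]; [:: (vx 0 0); (vx 0 1); (vx 0 4)]; [:: (vx 1 0)]; [:: (vx 1 3)]; [:: vN]]);
  ([:: (fx 0 4); (fx 1 0); (fx 1 3)], [:: [:: (vx 0 1); (vx 0 3); (vx 0 4)]; [:: (vx 1 0)]; [:: (vx 1 3)]; [:: (vx 1 1)]; [:: (vx 1 2)]; [:: (vx 1 4)]; [:: vN]]);
  ([:: (fx 0 4); (fx 1 2); (fx 1 4)], [:: [:: (vx 0 4); (vx 1 1)]; [:: (vx 1 2)]; [:: (vx 1 4)]; [:: (vx 0 1); (vx 0 3)]; [:: (vx 1 0)]; [:: (vx 1 3)]; [:: vN]]);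
  ([:: (fx 1 1); (fx 1 2); (fx 1 4)], [:: [:: (vx 1 1)]; [:: (vx 1 2)]; [:: (vx 1 4)]; [:: (vx 0 1); (vx 0 3); (vx 0 4)]; [:: (vx 1 0)]; [:: (vx 1 3)]; [:: vN]])].

Definition sp1 : seq F4V := [:: fx 0 1; fx 0 4; fx 1 0].
Definition sp2 : seq F4V := [:: fx 1 1; fx 1 4; fx 0 0].

Definition Wl (l : seq F4V) : seq (seq (option F4V)) :=
  nth [::] (map snd table) (find (fun p => perm_eq p.1 l) table).

Definition k34n (i j : nat) : bool := (i < 3) != (j < 3).

Definition goodb (l : seq F4V) : bool :=
  [|| ~~ uniq l, has (fun x => has (F4e x) l) l, perm_eq l sp1, perm_eq l sp2
    | checkW (addv_l l) 7 k34n (Wl l)].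

Lemma big_check : all (fun a => all (fun b => all (fun c => goodb [:: a; b; c]) allF4) allF4) allF4.
Proof. by vm_compute. Qed.
Definition q0 : 'I_3 := @Ordinal 3 0 isT.
Definition q1 : 'I_3 := @Ordinal 3 1 isT.
Definition q2 : 'I_3 := @Ordinal 3 2 isT.
Lemma card3 (P : 'I_3 -> bool) : #|[pred i | P i]| = P q0 + P q1 + P q2.
Proof.
rewrite -sum1_card big_mkcond /= !big_ord_recl big_ord0 /=.
have -> : lift ord0 ord0 = q1 :> 'I_3 by apply: val_inj.
have -> : lift ord0 (lift ord0 ord0) = q2 :> 'I_3 by apply: val_inj.
have -> : ord0 = q0 :> 'I_3 by apply: val_inj.
by rewrite !inE; case: (P q0); case: (P q1); case: (P q2).
Qed.
Lemma ffun3 (f g : cubeV) : f q0 = g q0 -> f q1 = g q1 -> f q2 = g q2 -> f = g.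
Proof.
move=> h0 h1 h2; apply/ffunP => -[[|[|[|k]]] Hi] //.
- by rewrite (_ : Ordinal Hi = q0) //; apply: val_inj.
- by rewrite (_ : Ordinal Hi = q1) //; apply: val_inj.
- by rewrite (_ : Ordinal Hi = q2) //; apply: val_inj.
Qed.
Definition qidx (x : option cubeV) : nat :=
  if x is Some u then 4 * u q0 + 2 * u q1 + u q2 else 8.
Definition pc (i : nat) : nat := odd i./2./2 + odd i./2 + odd i.
Definition ham (i j : nat) : nat :=
  (odd i./2./2 != odd j./2./2) + (odd i./2 != odd j./2) + (odd i != odd j).
Definition qN (i j : nat) : bool :=
  if i == 8 then (j < 8) && (pc j == 2) else if j == 8 then (i < 8) && (pc i == 2)
  else [&& i < 8, j < 8 & ham i j == 1].
Lemma qidx_inj : injective qidx.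
Proof.
case=> [u|]; case=> [v|] //=.
- move=> h; congr Some; apply: ffun3; move: h;
  by case: (u q0) (u q1) (u q2) (v q0) (v q1) (v q2) => [] [] [] [] [] [].
- by case: (u q0) (u q1) (u q2) => [] [] [] [].
- by case: (v q0) (v q1) (v q2) => [] [] [] [].
Qed.
Lemma qidx_lt x : qidx x < 9.
Proof. by case: x => [u|] //=; case: (u q0) (u q1) (u q2) => [] [] []. Qed.
Lemma qE x y : Qplus_e x y -> qN (qidx x) (qidx y).
Proof.
case: x => [u|]; case: y => [v|] //=; rewrite /cube_e ?card3.
- by case: (u q0) (u q1) (u q2) (v q0) (v q1) (v q2) => [] [] [] [] [] [].
- by case: (u q0) (u q1) (u q2) => [] [] [].
- by case: (v q0) (v q1) (v q2) => [] [] [].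
Qed.

From mathcomp Require Import zify.

Definition kidx (x : ('I_3 + 'I_4)%type) : nat :=
  match x with inl i => val i | inr j => 3 + val j end.

Lemma kidx_inj : injective kidx.
Proof.
case=> [i|i]; case=> [j|j] /= h.
- by congr inl; apply: val_inj.
- have := ltn_ord i; rewrite h; lia.
- have := ltn_ord j; rewrite -h; lia.
- by congr inr; apply: val_inj => /=; lia.
Qed.

Lemma kidx_lt x : kidx x < 7.
Proof. case: x => [i|i] /=; have := ltn_ord i; lia. Qed.

Lemma kE x y : K34e x y -> k34n (kidx x) (kidx y).
Proof.
rewrite /k34n; case: x => [i|i]; case: y => [j|j] //= _.
- by rewrite ltn_ord ltnNge leq_addr.
- by rewrite ltn_ord ltnNge leq_addr.
Qed.

Definition Wq1 : seq (seq (option F4V)) :=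
  [:: [:: vx 1 0]; [:: vx 1 1]; [:: vx 1 4]; [:: vx 0 2; vx 1 3]; [:: vN];
      [:: vx 0 4]; [:: vx 0 1]; [:: vx 0 0]; [:: vx 0 3]].
Definition Wq2 : seq (seq (option F4V)) :=
  [:: [:: vx 0 0]; [:: vx 0 1]; [:: vx 0 4]; [:: vx 0 3; vx 1 2]; [:: vN];
      [:: vx 1 4]; [:: vx 1 1]; [:: vx 1 0]; [:: vx 1 3]].

Lemma checkQ1 : checkW (addv_l sp1) 9 qN Wq1. Proof. by vm_compute. Qed.
Lemma checkQ2 : checkW (addv_l sp2) 9 qN Wq2. Proof. by vm_compute. Qed.

Lemma fij_fx (i : 'I_2) j k : val i = k -> j < 5 -> fij i j = fx k j.
Proof.
move=> hi hj; rewrite /fij /fx; apply: f_equal2; apply: val_inj => /=.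
- by rewrite hi; case: k hi => [|[|k]] //= hi; move: (ltn_ord i); rewrite hi.
- rewrite inordK //; by case: j hj => [|[|[|[|[|j]]]]].
Qed.

Lemma spset1 : [set fij i1 1; fij i1 4; fv i2] =i sp1.
Proof.
move=> x; rewrite !inE (@fij_fx i1 1 0) // (@fij_fx i1 4 0) //.
rewrite (_ : fv i2 = fx 1 0); first by rewrite orbA.
by apply: f_equal2; apply: val_inj.
Qed.

Lemma spset2 : [set fij i2 1; fij i2 4; fv i1] =i sp2.
Proof.
move=> x; rewrite !inE (@fij_fx i2 1 1) // (@fij_fx i2 4 1) //.
rewrite (_ : fv i1 = fx 0 0); first by rewrite orbA.
by apply: f_equal2; apply: val_inj.
Qed.

Theorem lemma4p12 (S : {set F4V}) (hS : #|S| = 3) :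
  (~ has_minor K34e (addv_e S) ->
     [\/ (exists x y, [/\ x \in S, y \in S & F4e x y]),
         S = [set fij i1 1; fij i1 4; fv i2] |
         S = [set fij i2 1; fij i2 4; fv i1]])
  /\
  ((S = [set fij i1 1; fij i1 4; fv i2] \/ S = [set fij i2 1; fij i2 4; fv i1]) ->
     has_minor Qplus_e (addv_e S)).
Proof.
split.
- move=> nm.
  have Hl : S =i enum S by move=> x; rewrite mem_enum.
  move: (enum_uniq S) (cardE S) Hl; case: (enum S) => [|a [|b [|c [|d l]]]];
    rewrite hS // => u _ Hl.
  have := allP (allP (allP big_check a (allF4_mem a)) b (allF4_mem b)) c (allF4_mem c).
  rewrite /goodb u; case/orP => [//|].
  case/orP=> [/hasP[x hx /hasP[y hy exy]]|].
    by apply: Or31; exists x, y; rewrite !Hl.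
  case/orP=> [hp|].
    apply: Or32; apply/setP => x; rewrite Hl (perm_mem hp).
    by rewrite -spset1.
  case/orP=> [hp|].
    apply: Or33; apply/setP => x; rewrite Hl (perm_mem hp).
    by rewrite -spset2.
  move=> hc; exfalso; apply: nm; rewrite (addv_eq Hl).
  exact: (minor_ok kidx_inj kidx_lt kE hc).
- case=> ->.
  + have H : [set fij i1 1; fij i1 4; fv i2] =i sp1 := spset1.
    rewrite (addv_eq H); exact: (minor_ok qidx_inj qidx_lt qE checkQ1).
  + have H : [set fij i2 1; fij i2 4; fv i1] =i sp2 := spset2.
    rewrite (addv_eq H); exact: (minor_ok qidx_inj qidx_lt qE checkQ2).
Qed.
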